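(* Let $A$ be a finitely generated abelian group with a finite generating subset $S$. There exists a constant $C>0$ such that for every subgroup $H\le A$, $\det(H)\le C(\|H\|_S)^{\mathrm{rank}_{\mathbb{Z}}(H)}$.
   Context: $\|\cdot\|_S$ is word length; for a subgroup $H$, $\|H\|_S=\min\{\max_{h\in X}\|h\|_S: X\text{ a finite generating subset of }H\}$. $\sqrt[A]{H}=\{a\in A:a^m\in H\text{ for some } m\ge1\}$ and $\det(H)=[\sqrt[A]{H}:H]$. $\mathrm{rank}_{\mathbb{Z}}$ is torsion-free rank. *)

(* Defs.v *)
(* Abelian groups are zmodType's (written additively). *)
From mathcomp Require Import all_boot all_order all_algebra.
Set Implicit Arguments. Unset Strict Implicit. Unset Printing Implicit Defensive.
Import Order.TTheory GRing.Theory Num.Theory.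
Local Open Scope ring_scope.

Section Defs.
Variable A : zmodType.

Definition is_subgroup (H : A -> Prop) : Prop :=
  H 0 /\ (forall x y, H x -> H y -> H (x - y)).

Definition in_span (X : seq A) (a : A) : Prop :=
  exists c : seq int, size c = size X /\
    a = \sum_(i < size X) (X`_i *~ c`_i).

Definition generates (X : seq A) (H : A -> Prop) : Prop :=
  (forall x, x \in X -> H x) /\ (forall h, H h -> in_span X h).

Definition wordlen_le (S : seq A) (a : A) (n : nat) : Prop :=
  exists w : seq A, (size w <= n)%N /\
    (forall y, y \in w -> (y \in S) \/ (- y \in S)) /\
    a = \sum_(y <- w) y.

Definition subgroup_norm_le (S : seq A) (H : A -> Prop) (m : nat) : Prop :=
  exists X : seq A, generates X H /\ forall x, x \in X -> wordlen_le S x m.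

Definition subgroup_norm_is (S : seq A) (H : A -> Prop) (n : nat) : Prop :=
  subgroup_norm_le S H n /\ forall m, subgroup_norm_le S H m -> (n <= m)%N.

Definition isolator (H : A -> Prop) : A -> Prop :=
  fun a => exists m : nat, (0 < m)%N /\ H (a *+ m).

(* [K : H] = d : a complete system of d distinct coset representatives *)
Definition index_is (K H : A -> Prop) (d : nat) : Prop :=
  exists c : seq A, size c = d /\
    (forall i, (i < d)%N -> K c`_i) /\
    (forall a, K a -> exists i, (i < d)%N /\ H (a - c`_i)) /\
    (forall i j, (i < d)%N -> (j < d)%N -> H (c`_i - c`_j) -> i = j).

Definition det_is (H : A -> Prop) (d : nat) : Prop := index_is (isolator H) H d.

Definition Zindep (s : seq A) : Prop :=
  forall c : seq int, size c = size s ->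
    \sum_(i < size s) (s`_i *~ c`_i) = 0 -> forall i, (i < size s)%N -> c`_i = 0.

Definition rankZ_is (H : A -> Prop) (r : nat) : Prop :=
  (exists s : seq A, size s = r /\ (forall x, x \in s -> H x) /\ Zindep s) /\
  (forall s : seq A, (forall x, x \in s -> H x) -> Zindep s -> (size s <= r)%N).

End Defs.

(* Main.v *)
Require Import Defs.
From mathcomp Require Import all_boot all_order all_algebra all_fingroup zify.
From Stdlib Require Import ClassicalEpsilon Classical.
Set Implicit Arguments. Unset Strict Implicit. Unset Printing Implicit Defensive.
Import Order.TTheory GRing.Theory Num.Theory.
Local Open Scope ring_scope.

Lemma ex_min (P : nat -> Prop) : (exists n, P n) -> exists n, P n /\ forall m, P m -> (n <= m)%N.
Proof.
move=> [n Pn]; apply: NNPP => hn.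
have key : forall k m, (m <= k)%N -> ~ P m.
  elim=> [|k IH] m hm Pm.
    apply: hn; exists m; split => // m' _; move: hm; lia.
  case: (leqP m k) => hmk; first exact: IH hmk Pm.
  apply: hn; exists m; split => // m' Pm'.
  case: (leqP m m') => // hlt; exfalso; apply: (IH m') => //; lia.
exact: (key n n (leqnn n) Pn).
Qed.

Lemma ex_max (P : nat -> Prop) B : (exists n, P n) -> (forall n, P n -> (n <= B)%N) ->
  exists n, P n /\ forall m, P m -> (m <= n)%N.
Proof.
move=> [n0 Pn0] hB.
have [k [Pk kmin]] := @ex_min (fun k => P (B - k)%N) (ex_intro _ (B - n0)%N
   (eq_ind_r P Pn0 (subKn (hB _ Pn0)))).
exists (B - k)%N; split => // m Pm.
have hm := hB _ Pm.
have := kmin (B - m)%N; rewrite subKn //; move=> /(_ Pm); lia.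
Qed.

Section Gen.
Variable A : zmodType.
Implicit Types (H K : A -> Prop) (X Y : seq A).

Lemma subN H x : is_subgroup H -> H x -> H (- x).
Proof. by case=> H0 HB Hx; rewrite -sub0r; apply: HB. Qed.
Lemma subD H x y : is_subgroup H -> H x -> H y -> H (x + y).
Proof. move=> hH Hx Hy; rewrite -[y]opprK; apply: hH.2 => //; exact: subN. Qed.
Lemma subB H x y : is_subgroup H -> H x -> H y -> H (x - y).
Proof. by move=> hH; apply: hH.2. Qed.
Lemma subMn H x n : is_subgroup H -> H x -> H (x *+ n).
Proof.
move=> hH Hx; elim: n => [|n IH]; first by rewrite mulr0n; exact hH.1.
by rewrite mulrS; apply: subD.
Qed.
Lemma subMz H x z : is_subgroup H -> H x -> H (x *~ z).
Proof.
move=> hH Hx; case: z => n; first exact: subMn.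
by rewrite NegzE mulrNz; apply: subN => //; apply: subMn.
Qed.
Lemma sub_sum H I (r : seq I) (P : pred I) (F : I -> A) : is_subgroup H ->
  (forall i, P i -> H (F i)) -> H (\sum_(i <- r | P i) F i).
Proof.
move=> hH HF; elim/big_rec: _ => [|i x Pi Hx]; first exact hH.1.
by apply: subD => //; apply: HF.
Qed.
Lemma sub_ext H x y : is_subgroup H -> H (x - y) -> H (y - x).
Proof. by move=> hH h; rewrite -opprB; apply: subN. Qed.
Lemma sub_trans H x y z : is_subgroup H -> H (x - y) -> H (y - z) -> H (x - z).
Proof. by move=> hH h1 h2; rewrite -(subrK y x) -addrA; apply: subD. Qed.

Definition spn X a := exists c : 'I_(size X) -> int, a = \sum_(i < size X) X`_i *~ c i.

Lemma spn_sub X : is_subgroup (spn X).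
Proof.
split; first by exists (fun _ => 0); rewrite big1 // => i _; rewrite mulr0z.
move=> x y [c1 ->] [c2 ->]; exists (fun i => c1 i - c2 i).
by rewrite -sumrB; apply: eq_bigr => i _; rewrite mulrzBr.
Qed.

Lemma spn_mem X x : x \in X -> spn X x.
Proof.
move=> xX; have hi : (index x X < size X)%N by rewrite index_mem.
exists (fun j => ((j : nat) == index x X)%:Z).
rewrite (bigD1 (Ordinal hi)) //= eqxx mulr1z nth_index // big1 ?addr0 // => j hj.
suff -> : ((j : nat) == index x X) = false by rewrite mulr0z.
by apply/negbTE; apply: contra hj => /eqP h; apply/eqP/val_inj.
Qed.

Lemma spn_min H X a : is_subgroup H -> (forall x, x \in X -> H x) -> spn X a -> H a.
Proof.
move=> hH hX [c ->]; apply: sub_sum => // i _; apply: subMz => //.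
by apply: hX; apply: mem_nth.
Qed.

Lemma in_span_spn X a : in_span X a <-> spn X a.
Proof.
split=> [[c [_ ->]]|[c ->]]; first by exists (fun i => c`_i).
exists [seq c i | i <- enum 'I_(size X)]; rewrite size_map size_enum_ord; split => //.
by apply: eq_bigr => i _; rewrite (nth_map i) ?size_enum_ord // nth_ord_enum.
Qed.

Definition indep X := forall c : 'I_(size X) -> int, \sum_(i < size X) X`_i *~ c i = 0 -> forall i, c i = 0.

Lemma Zindep_indep X : Zindep X <-> indep X.
Proof.
split=> [hZ c hc i|hI c hs hc i hi].
  have := hZ [seq c i | i <- enum 'I_(size X)].
  rewrite size_map size_enum_ord => /(_ erefl).
  have E : forall j : 'I_(size X), [seq c i | i <- enum 'I_(size X)]`_j = c j.
    by move=> j; rewrite (nth_map j) ?size_enum_ord // nth_ord_enum.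
  move=> /(_ _ i (ltn_ord i)); rewrite E; apply.
  by rewrite (eq_bigr (fun j : 'I_(size X) => X`_j *~ c j)) // => j _; rewrite E.
exact: (hI (fun j => c`_j) hc (Ordinal hi)).
Qed.

Lemma iso_sub H : is_subgroup H -> is_subgroup (isolator H).
Proof.
move=> hH; split; first by exists 1%N; split => //; rewrite mulr1n; exact hH.1.
move=> x y [m1 [m1p h1]] [m2 [m2p h2]]; exists (m1 * m2)%N; split; first by rewrite muln_gt0 m1p.
rewrite mulrnBl; apply: subB => //.
  by rewrite mulrnA; apply: subMn.
by rewrite mulnC mulrnA; apply: subMn.
Qed.

Lemma iso_mono H K a : (forall b, H b -> K b) -> isolator H a -> isolator K a.
Proof. by move=> hHK [m [mp h]]; exists m; split => //; apply: hHK. Qed.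

Lemma iso_iso H a : isolator (isolator H) a -> isolator H a.
Proof.
move=> [m1 [m1p [m2 [m2p h]]]]; exists (m1 * m2)%N; split; first by rewrite muln_gt0 m1p.
by rewrite mulrnA.
Qed.

Lemma iso_self H a : H a -> isolator H a.
Proof. by move=> h; exists 1%N; rewrite mulr1n. Qed.

Lemma iso_of_mulz Y x z : z != 0 -> spn Y (x *~ z) -> isolator (spn Y) x.
Proof.
case: z => n hz h.
  by exists n; split => //; rewrite lt0n; apply: contraNneq hz => ->.
exists n.+1; split => //.
have := subN (spn_sub Y) h; by rewrite NegzE mulrNz opprK.
Qed.

Lemma dep_extend Y x : indep Y -> ~ indep (x :: Y) -> isolator (spn Y) x.
Proof.
move=> hY hn; apply: NNPP => hiso; apply: hn => c hc.
have c0 : c ord0 = 0.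
  apply: NNPP => hc0; apply: hiso; apply: (@iso_of_mulz Y x (c ord0)); first by apply/eqP.
  move: hc; rewrite big_ord_recl /= => /eqP; rewrite addr_eq0 => /eqP ->.
  apply: subN; first exact: spn_sub.
  by exists (fun i => c (lift ord0 i)); apply: eq_bigr.
have cl : forall i, c (lift ord0 i) = 0.
  apply: hY; move: hc; rewrite big_ord_recl /= c0 mulr0z add0r => h.
  rewrite -[RHS]h. by apply: eq_bigr.
move=> i; case: (unliftP ord0 i) => [j ->|->] //.
Qed.

Lemma indep_nil : indep [::].
Proof. by move=> c _ []. Qed.

Lemma greedy X : exists Y, (forall y, y \in Y -> y \in X) /\ indep Y /\
  (forall x, x \in X -> isolator (spn Y) x).
Proof.
elim: X => [|x X [Y [hYX [hY hiso]]]].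
  by exists [::]; split => //; split => //; exact: indep_nil.
case: (classic (indep (x :: Y))) => hxY.
  exists (x :: Y); split.
    by move=> y; rewrite !inE => /orP [->|/hYX ->] //; rewrite orbT.
  split => // x'; rewrite inE => /orP [/eqP ->|hx'].
    by apply: iso_self; apply: spn_mem; rewrite inE eqxx.
  apply: iso_mono (hiso _ hx') => b; apply: spn_min; first exact: spn_sub.
  by move=> y hy; apply: spn_mem; rewrite inE hy orbT.
exists Y; split; first by move=> y /hYX; rewrite inE => ->; rewrite orbT.
split => // x'; rewrite inE => /orP [/eqP ->|/hiso //].
exact: dep_extend.
Qed.

Lemma indep_zero Y : indep Y -> (forall y, y \in Y -> y = 0) -> Y = [::].
Proof.
case: Y => // y Y hY h0; exfalso.
have := hY (fun _ => 1); rewrite big1 => [/(_ erefl ord0) //|i _].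
by rewrite (h0 _ (mem_nth 0 (ltn_ord i))) mul0rz.
Qed.

Lemma extract_aux K H (c : seq A) : is_subgroup H -> (forall x, x \in c -> K x) ->
  exists c', (size c' <= size c)%N /\ (forall x, x \in c' -> K x) /\
    (forall x, x \in c -> exists2 y, y \in c' & H (x - y)) /\
    (forall i j, (i < size c')%N -> (j < size c')%N -> H (c'`_i - c'`_j) -> i = j).
Proof.
move=> hH; elim: c => [|x c IH] hK.
  by exists [::]; split => //; split => //; split => // x.
have hK0 : forall y, y \in c -> K y by move=> y hy; apply: hK; rewrite inE hy orbT.
have [c' [hs [hK' [hcov hd]]]] := IH hK0.
case: (classic (exists2 y, y \in c' & H (x - y))) => hx.
  exists c'; split; first by rewrite /= ltnW // ltnS.
  split => //; split => // y; rewrite inE => /orP [/eqP -> //|]; exact: hcov.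
exists (x :: c'); split; first by rewrite /= ltnS.
split; first by move=> y; rewrite inE => /orP [/eqP ->|/hK' //]; apply: hK; rewrite inE eqxx.
split.
  move=> y; rewrite inE => /orP [/eqP ->|/hcov [z hz hyz]].
    by exists x; rewrite ?inE ?eqxx // subrr; exact hH.1.
  by exists z; rewrite // inE hz orbT.
move=> [|i] [|j] //= hi hj hij.
- by exfalso; apply: hx; exists c'`_j => //; apply: mem_nth.
- by exfalso; apply: hx; exists c'`_i; [apply: mem_nth | apply: sub_ext].
- by congr S; apply: hd.
Qed.

Lemma extract K H (c : seq A) : is_subgroup H -> (forall x, x \in c -> K x) ->
  (forall a, K a -> exists2 x, x \in c & H (a - x)) ->
  exists d, (d <= size c)%N /\ index_is K H d.
Proof.
move=> hH hK hcov.
have [c' [hs [hK' [hcov' hd]]]] := extract_aux hH hK.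
exists (size c'); split => //; exists c'; split => //; split.
  by move=> i hi; apply: hK'; apply: mem_nth.
split => // a Ka; have [x xc hax] := hcov a Ka; have [y yc hxy] := hcov' x xc.
exists (index y c'); rewrite index_mem nth_index //; split => //.
exact: sub_trans hax hxy.
Qed.

End Gen.
Lemma det_bound p (B : 'M[int]_p) (K : nat) : (forall i j, `|B i j| <= K%:R) ->
  `|\det B| <= p`!%:R * K%:R ^+ p.
Proof.
move=> hB; rewrite /determinant.
apply: le_trans (ler_norm_sum _ _ _) _.
apply: (@le_trans _ _ (\sum_(s : 'S_p) K%:R ^+ p)).
  apply: ler_sum => s _; rewrite normrM normrX normrN1 expr1n mul1r normr_prod.
  have -> : (K%:R : int) ^+ p = \prod_(i < p) (K%:R : int) by rewrite prodr_const card_ord.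
  by apply: ler_prod => i _; rewrite normr_ge0 hB.
by rewrite sumr_const card_Sn mulr_natl.
Qed.

Lemma indep_minor p k (V : 'M[int]_(p, k)) :
  (forall c : 'rV[int]_p, c *m V = 0 -> c = 0) ->
  (p <= k)%N /\ exists f : 'I_p -> 'I_k, \det (\matrix_(i, j) V i (f j)) != 0.
Proof.
move=> hV.
pose Vq := map_mx (intr : int -> rat) V.
have fr : row_free Vq.
  apply: inj_row_free => u hu.
  pose D := \prod_(i < p) denq (u 0 i).
  pose c := \row_i (numq (u 0 i) * \prod_(j < p | j != i) denq (u 0 j)).
  have hc : map_mx intr c = (D%:~R : rat) *: u.
    apply/rowP => i; rewrite !mxE rmorphM /= numqE rmorph_prod /= /D rmorph_prod /=.
    by rewrite [in RHS](bigD1 i) //= -mulrA mulrC.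
  have cV : c *m V = 0.
    have h : map_mx (intr : int -> rat) (c *m V) = 0.
      by rewrite map_mxM /= hc -scalemxAl hu scaler0.
    apply/matrixP => i j; apply: (@intr_inj rat).
    move/matrixP: h => /(_ i j); rewrite !mxE => ->; by rewrite mulr0z.
  have := hV c cV => c0.
  have : (D%:~R : rat) *: u = 0.
    by rewrite -hc c0; apply/matrixP => i j; rewrite !mxE.
  move/eqP; rewrite scaler_eq0 => /orP [|/eqP //].
  rewrite intr_eq0 prodf_seq_eq0 => /hasP [i _ /=]; by rewrite denq_eq0.
have rk : \rank Vq = p by apply/eqP.
split; first by rewrite -rk rank_leq_col.
have fT : row_full Vq^T by rewrite /row_full mxrank_tr rk.
exists (fun i => fullrankfun fT i).
have := fullrowsub_unit fT; rewrite unitmxE.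
have -> : rowsub (fullrankfun fT) Vq^T = map_mx intr (\matrix_(i, j) V i (fullrankfun fT j))^T.
  by apply/matrixP => i j; rewrite !mxE.
by rewrite det_map_mx det_tr unitfE intr_eq0.
Qed.
Lemma absz_unit (x : int) : x \is a GRing.unit -> `|x|%N = 1%N.
Proof. by case/orP => /eqP ->. Qed.

Lemma absz_prod I (r : seq I) (P : pred I) (F : I -> int) :
  `|(\prod_(i <- r | P i) F i)%R|%N = (\prod_(i <- r | P i) `|F i|%N)%N.
Proof. by apply: (big_morph (fun x : int => `|x|%N)) => // x y; rewrite abszM. Qed.

Lemma reps_det p (B : 'M[int]_p) : \det B != 0 ->
  exists R : seq 'rV[int]_p, (size R <= `|\det B|)%N /\
    forall u : 'rV[int]_p, exists2 rho, rho \in R & exists c : 'rV[int]_p, u = rho + c *m B.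
Proof.
move=> hdet.
case: (int_Smith_normal_form B) => L uL [R' uR [d _ hB]].
pose dr := \row_(i < p) d`_i.
have hD : \matrix_(i, j) (d`_i *+ (i == j :> nat)) = diag_mx dr.
  by apply/matrixP => i j; rewrite !mxE.
rewrite hD in hB.
have detB : \det B = \det L * (\prod_(i < p) d`_i) * \det R'.
  by rewrite hB !det_mulmx det_diag; congr (_ * _ * _); apply: eq_bigr => i _; rewrite mxE.
have dnz : forall i : 'I_p, d`_i != 0.
  move=> i; apply: contraNneq hdet => hi.
  by rewrite detB (bigD1 i) //= hi mul0r mulr0 mul0r.
have absB : `|\det B|%N = (\prod_(i < p) `|(d`_i)%R|%N)%N.
  rewrite detB !abszM absz_prod.
  by rewrite !absz_unit ?mul1n ?muln1 // -unitmxE.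
pose F := {dffun forall i : 'I_p, 'I_(`|(d`_i)%R|%N)}.
exists [seq (\row_i ((g i : nat)%:Z)) *m R' | g : F <- enum F]; split.
  rewrite size_map -cardE card_dep_ffun absB foldrE big_map big_enum /=.
  by rewrite (eq_bigr (fun i : 'I_p => `|(d`_i)%R|%N)) // => i _; rewrite card_ord.
move=> u.
pose u' := u *m invmx R'.
pose w := fun i : 'I_p => u' 0 i.
have hrho : forall i : 'I_p, (`|(w i %% d`_i)%Z|%N < `|(d`_i)%R|%N)%N.
  move=> i; rewrite -ltz_nat !abszE ger0_norm ?modz_ge0 ?dnz //.
  exact: ltz_mod.
pose g : F := finfun (fun i => Ordinal (hrho i)).
exists ((\row_i ((g i : nat)%:Z)) *m R'); first by apply: map_f; rewrite mem_enum.
exists ((\row_i (w i %/ d`_i)%Z) *m invmx L).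
rewrite hB !mulmxA mulmxKV // -mulmxDl.
rewrite -[LHS](mulmxKV uR u) -/u'; congr (_ *m _).
apply/rowP => i; rewrite mul_mx_diag; transitivity (w i) => //.
rewrite !mxE ffunE /= gez0_abs ?modz_ge0 ?dnz //.
by rewrite addrC -divz_eq.
Qed.

Lemma fact_mono p k : (p <= k)%N -> (p`! <= k`!)%N.
Proof.
elim: k => [|k IH]; first by rewrite leqn0 => /eqP ->.
rewrite leq_eqVlt => /orP [/eqP -> //|]; rewrite ltnS => /IH h.
by rewrite factS (leq_trans h) // leq_pmull.
Qed.

Section Pick.
Variable A : zmodType.
Definition pick (P : A -> Prop) : A :=
  match excluded_middle_informative (exists a, P a) with
  | left h => proj1_sig (constructive_indefinite_description _ h)
  | right _ => 0
  end.
Lemma pickP (P : A -> Prop) : (exists a, P a) -> P (pick P).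
Proof.
rewrite /pick; case: excluded_middle_informative => // h _.
exact: proj2_sig (constructive_indefinite_description _ h).
Qed.
Lemma pick_or (P : A -> Prop) : P (pick P) \/ pick P = 0.
Proof. rewrite /pick; case: excluded_middle_informative => h; [left|by right]. exact: proj2_sig (constructive_indefinite_description _ h). Qed.
End Pick.

Section Main.
Variable A : zmodType.
Variable S : seq A.
Hypothesis hS : generates S (fun _ : A => True).
Variable E : seq A.
Hypothesis hE : indep E.
Variable M : nat.
Hypothesis hM : (0 < M)%N.
Variable psi : A -> 'rV[int]_(size E).
Hypothesis hpsi : forall a, a *+ M = \sum_(i < size E) E`_i *~ psi a 0 i.
Implicit Types (Y : seq A).

Lemma spnS a : spn S a.
Proof. by apply/in_span_spn; apply: hS.2. Qed.

Lemma psi_uniq a (v : 'rV[int]_(size E)) : a *+ M = \sum_(i < size E) E`_i *~ v 0 i -> psi a = v.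
Proof.
move=> hv; apply/rowP => i; apply/eqP; rewrite -subr_eq0; apply/eqP.
have := hE (c := fun i => psi a 0 i - v 0 i); apply.
rewrite (eq_bigr (fun i : 'I_(size E) => E`_i *~ psi a 0 i - E`_i *~ v 0 i)).
  by rewrite sumrB -hpsi -hv subrr.
by move=> j _; rewrite mulrzBr.
Qed.

Lemma psi0 : psi 0 = 0.
Proof. by apply: psi_uniq; rewrite mul0rn big1 // => i _; rewrite mxE mulr0z. Qed.

Lemma psiD a b : psi (a + b) = psi a + psi b.
Proof.
apply: psi_uniq; rewrite mulrnDl !hpsi -big_split /=.
by apply: eq_bigr => i _; rewrite mxE mulrzDr.
Qed.

Lemma psiN a : psi (- a) = - psi a.
Proof. by apply/eqP; rewrite -addr_eq0 -psiD addNr psi0. Qed.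

Lemma psiB a b : psi (a - b) = psi a - psi b.
Proof. by rewrite psiD psiN. Qed.

Lemma psiMz a z : psi (a *~ z) = z *: psi a.
Proof.
apply: psi_uniq; rewrite pmulrn -mulrzA mulrC mulrzA -pmulrn hpsi mulrz_suml.
by apply: eq_bigr => i _; rewrite mxE -mulrzA mulrC.
Qed.

Lemma psiMn a n : psi (a *+ n) = n%:Z *: psi a.
Proof. by rewrite pmulrn psiMz. Qed.

Lemma psi_sum I (r : seq I) (P : pred I) (F : I -> A) :
  psi (\sum_(i <- r | P i) F i) = \sum_(i <- r | P i) psi (F i).
Proof. exact: (big_morph psi psiD psi0). Qed.

Lemma psi_ker a : psi a = 0 -> a *+ M = 0.
Proof. by move=> h; rewrite hpsi h big1 // => i _; rewrite mxE mulr0z. Qed.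

Lemma indep_mul Y (c : 'I_(size Y) -> int) n : indep Y -> (0 < n)%N ->
  (\sum_(i < size Y) Y`_i *~ c i) *+ n = 0 -> forall i, c i = 0.
Proof.
move=> hY hn h i; have := hY (fun i => c i * n%:Z).
rewrite (eq_bigr (fun i : 'I_(size Y) => (Y`_i *~ c i) *+ n)).
  rewrite sumrMnl h => /(_ erefl i) /eqP.
  by rewrite mulf_eq0 => /orP [/eqP //|]; rewrite eqz_nat => /eqP hn0; move: hn; rewrite hn0.
by move=> j _; rewrite mulrzA -pmulrn.
Qed.

Definition psimx Y := \matrix_(i < size Y, j < size E) psi Y`_i 0 j.

Lemma psi_comb Y (c : 'rV[int]_(size Y)) :
  psi (\sum_(i < size Y) Y`_i *~ c 0 i) = c *m psimx Y.
Proof.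
rewrite psi_sum; apply/rowP => j; rewrite !mxE summxE.
by apply: eq_bigr => i _; rewrite psiMz !mxE.
Qed.

Lemma psi_indep Y : indep Y -> forall c : 'rV[int]_(size Y), c *m psimx Y = 0 -> c = 0.
Proof.
move=> hY c hc; rewrite -psi_comb in hc.
have h0 := @indep_mul Y (fun i => c 0 i) M hY hM (psi_ker hc).
by apply/rowP => i; rewrite mxE h0.
Qed.

Lemma indep_le Y : indep Y -> (size Y <= size E)%N.
Proof. by move=> hY; case: (indep_minor (psi_indep hY)). Qed.


Definition C1 := (\max_(s <- S) \max_(j < size E) `|psi s 0%R j|%N)%N.

Lemma psiS_bound y j : (y \in S) \/ (- y \in S) -> `|psi y 0 j| <= C1%:R.
Proof.
have key : forall s, s \in S -> `|psi s 0 j| <= C1%:R.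
  move=> s hs; rewrite -abszE natz lez_nat.
  rewrite /C1; apply: (leq_trans _ (leq_bigmax_seq (F := fun s => \max_(j < size E) `|psi s 0%R j|%N) s hs isT)).
  exact: (leq_bigmax (F := fun j => `|psi s 0%R j|%N) j).
case=> [/key //|/key]; by rewrite psiN mxE normrN.
Qed.

Lemma wl_bound a n : wordlen_le S a n -> forall j, `|psi a 0 j| <= (n * C1)%:R.
Proof.
move=> [w [hw [hwS ->]]] j; rewrite psi_sum summxE.
apply: le_trans (ler_norm_sum _ _ _) _.
apply: (@le_trans _ _ (\sum_(y <- w) (C1%:R : int))).
  rewrite big_seq [X in _ <= X]big_seq.
  by apply: ler_sum => y hy; apply: psiS_bound; apply: hwS.
rewrite big_const_seq count_predT iter_addr addr0 -mulrnA ler_nat mulnC.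
by rewrite leq_mul2r hw orbT.
Qed.

Definition tors (a : A) := isolator (fun x => x = 0) a.

Lemma zero_sub : is_subgroup (fun x : A => x = 0).
Proof. by split => // x y -> ->; rewrite subrr. Qed.

Lemma spnE_tors f : spn E f -> tors f -> f = 0.
Proof.
move=> [c ->] [m [hm h]]; have h0 := @indep_mul E c m hE hm h.
by rewrite big1 // => i _; rewrite h0 mulr0z.
Qed.

Lemma spnE_M x : spn E (x *+ M).
Proof. by exists (fun i => psi x 0 i); rewrite hpsi. Qed.

Lemma R0_ex : exists R0 : seq A, forall a, exists2 r, r \in R0 & spn E (a - r).
Proof.
pose Mz := (M%:Z).
have Mz0 : 0 < Mz by rewrite ltz_nat.
exists [seq \sum_(j < size S) S`_j *~ (g j : nat)%:Z | g : {ffun 'I_(size S) -> 'I_M} <- enum {ffun 'I_(size S) -> 'I_M}].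
move=> a; have [c ha] := spnS a.
have hr : forall j, (`|(c j %% Mz)%Z|%N < M)%N.
  by move=> j; rewrite -ltz_nat gez0_abs ?modz_ge0 ?gt_eqF // ltz_pmod.
pose g : {ffun 'I_(size S) -> 'I_M} := [ffun j => Ordinal (hr j)].
exists (\sum_(j < size S) S`_j *~ (g j : nat)%:Z); first by apply: map_f; rewrite mem_enum.
have -> : a - \sum_(j < size S) S`_j *~ (g j : nat)%:Z = (\sum_(j < size S) S`_j *~ (c j %/ Mz)%Z) *+ M.
  rewrite ha -sumrB -sumrMnl; apply: eq_bigr => j _.
  rewrite ffunE /= gez0_abs ?modz_ge0 ?gt_eqF // -mulrzBr pmulrn -mulrzA.
  by congr (_ *~ _); rewrite {1}(divz_eq (c j) Mz) addrK.
exact: spnE_M.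
Qed.

Lemma Tl_ex : exists Tl : seq A, (forall t, t \in Tl -> tors t) /\ (forall t, tors t -> t \in Tl).
Proof.
have [R0 hR0] := R0_ex.
exists [seq pick (fun t => tors t /\ spn E (t - r)) | r <- R0]; split.
  move=> t /mapP [r _ ->].
  case: (pick_or (fun t => tors t /\ spn E (t - r))) => [[] //|->].
  by exists 1%N; rewrite mulr1n.
move=> t ht; have [r hr htr] := hR0 t.
pose t' := pick (fun t => tors t /\ spn E (t - r)).
have [ht' ht'r] : tors t' /\ spn E (t' - r).
  exact: (@pickP _ (fun t => tors t /\ spn E (t - r)) (ex_intro _ t (conj ht htr))).
have -> : t = t'.
  apply/eqP; rewrite -subr_eq0; apply/eqP; apply: spnE_tors.
    exact: sub_trans (spn_sub E) htr (sub_ext (spn_sub E) ht'r).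
  exact: subB (iso_sub zero_sub) ht ht'.
exact: (map_f (fun r => pick (fun t => tors t /\ spn E (t - r))) hr).
Qed.


Variable Tl : seq A.
Hypothesis hTl1 : forall t, t \in Tl -> tors t.
Hypothesis hTl2 : forall t, tors t -> t \in Tl.

Lemma tors_iso Y t : tors t -> isolator (spn Y) t.
Proof. move=> [m [hm h]]; exists m; split => //; rewrite h; exact: (spn_sub Y).1. Qed.

Lemma mulmx_det0 p (c : 'rV[int]_p) (B : 'M[int]_p) : \det B != 0 -> c *m B = 0 -> c = 0.
Proof.
move=> hd h; have : c *m B *m \adj B = 0 by rewrite h mul0mx.
by rewrite -mulmxA mul_mx_adj mul_mx_scalar => /eqP; rewrite scalemx_eq0 (negbTE hd) /= => /eqP.
Qed.

Lemma cover Y : indep Y -> exists R : seq A,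
  (forall x, x \in R -> isolator (spn Y) x) /\
  (forall a, isolator (spn Y) a -> exists2 x, x \in R & spn Y (a - x)) /\
  (forall n, (forall y, y \in Y -> wordlen_le S y n) ->
     (size R <= (size E)`! * (n * C1) ^ size Y * size Tl)%N).
Proof.
move=> hY.
have [hpk [f hf]] := indep_minor (psi_indep hY).
set B := \matrix_(i, j) psimx Y i (f j) in hf.
have [Rv [hRv hcov]] := reps_det hf.
pose proj (a : A) : 'rV[int]_(size Y) := \row_j psi a 0 (f j).
pose P rho a := isolator (spn Y) a /\ exists c, proj a = rho + c *m B.
pose aR rho := pick (P rho).
have projB : forall u v, proj (u - v) = proj u - proj v.
  by move=> u v; apply/rowP => j; rewrite !mxE psiB !mxE.
have projMn : forall u m, proj (u *+ m) = m%:Z *: proj u.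
  by move=> u m; apply/rowP => j; rewrite !mxE psiMn !mxE.
have projC : forall e : 'I_(size Y) -> int,
    proj (\sum_(i < size Y) Y`_i *~ e i) = (\row_i e i) *m B.
  move=> e; apply/rowP => j.
  have -> : \sum_(i < size Y) Y`_i *~ e i = \sum_(i < size Y) Y`_i *~ (\row_i e i) 0 i.
    by apply: eq_bigr => i _; rewrite mxE.
  by rewrite /proj mxE psi_comb !mxE; apply: eq_bigr => i _; rewrite !mxE.
exists [seq aR rho + t | rho <- Rv, t <- Tl]; split.
  move=> x /allpairsP [[rho t] [_ ht ->]] /=.
  apply: subD; first exact: iso_sub (spn_sub Y).
    rewrite /aR; case: (pick_or (P rho)) => [[] //|->]; exact: (iso_sub (spn_sub Y)).1.
  exact: tors_iso (hTl1 ht).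
split.
  move=> a ha.
  have [rho hrho [c hc]] := hcov (proj a).
  have [ha' [c' hc']] : P rho (aR rho).
    by apply: (@pickP _ (P rho)); exists a; split => //; exists c.
  pose g := c - c'.
  pose s := \sum_(i < size Y) Y`_i *~ g 0 i.
  pose b := a - aR rho - s.
  have hs : spn Y s by exists (fun i => g 0 i).
  have projs : proj s = g *m B.
    by rewrite projC; congr (_ *m _); apply/rowP => i; rewrite mxE.
  have pb : proj b = 0.
    by rewrite /b !projB hc hc' projs /g mulmxBl opprD addrACA subrr add0r subrr.
  have hb : isolator (spn Y) b.
    apply: subB; first exact: iso_sub (spn_sub Y).
      by apply: subB => //; exact: iso_sub (spn_sub Y).
    exact: iso_self.
  have tb : tors b.
    case: hb => [m [hm [e he]]]; exists m; split => //.
    have e0 : \row_i e i = 0.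
      apply: (mulmx_det0 hf); rewrite -projC -he projMn pb scaler0 //.
    rewrite he big1 // => i _.
    by move/rowP: e0 => /(_ i); rewrite !mxE => ->; rewrite mulr0z.
  exists (aR rho + b); first exact: allpairs_f (hTl2 tb).
  by rewrite /b opprD addrA subKr.
move=> n hn.
rewrite size_allpairs leq_mul2r; apply/orP; right.
apply: leq_trans hRv _.
have hbd : forall i j, `|B i j| <= (n * C1)%:R.
  move=> i j; rewrite !mxE; apply: wl_bound; apply: hn; exact: mem_nth.
have := det_bound hbd; rewrite -abszE -natrX -natrM natz lez_nat => h.
apply: leq_trans h _; rewrite leq_mul2r; apply/orP; right; exact: fact_mono.
Qed.


Lemma wl_mono a n n' : wordlen_le S a n -> (n <= n')%N -> wordlen_le S a n'.
Proof. by move=> [w [hw hw']] hn; exists w; split => //; apply: leq_trans hw hn. Qed.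

Lemma wl_zero a : wordlen_le S a 0 -> a = 0.
Proof. by move=> [[|y w] [hw [_ ->]]] //; rewrite big_nil. Qed.

Lemma wl_all a : exists m, wordlen_le S a m.
Proof.
pose Q a := exists m, wordlen_le S a m.
have hQ : is_subgroup Q.
  split; first by exists 0%N, [::]; split => //; split => //; rewrite big_nil.
  move=> x y [m1 [w1 [h1 [h1' ->]]]] [m2 [w2 [h2 [h2' ->]]]].
  exists (m1 + m2)%N, (w1 ++ map -%R w2); split.
    by rewrite size_cat size_map leq_add.
  split.
    move=> z; rewrite mem_cat => /orP [/h1' //|/mapP [z' /h2' hz' ->]].
    by rewrite opprK; case: hz' => h; [right|left].
  by rewrite big_cat /= big_map sumrN.
apply: (spn_min hQ) (spnS a) => x hx; exists 1%N, [:: x]; split => //; split.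
  by move=> z; rewrite inE => /eqP ->; left.
by rewrite big_seq1.
Qed.

Lemma wl_list (X : seq A) : exists m, forall x, x \in X -> wordlen_le S x m.
Proof.
elim: X => [|x X [m hm]]; first by exists 0%N.
have [m1 h1] := wl_all x.
exists (maxn m m1) => y; rewrite inE => /orP [/eqP ->|/hm h].
  by apply: wl_mono h1 _; rewrite leq_maxr.
by apply: wl_mono h _; rewrite leq_maxl.
Qed.

Lemma expn_mono m m' e : (m <= m')%N -> (m ^ e <= m' ^ e)%N.
Proof. by move=> h; elim: e => // e IH; rewrite !expnS leq_mul. Qed.

Lemma main_sec H : is_subgroup H -> exists d n r : nat,
  det_is H d /\ subgroup_norm_is S H n /\ rankZ_is H r /\
  (d <= (size E)`! * C1.+1 ^ (size E) * size Tl * n ^ r)%N.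
Proof.
move=> hH.
pose Pr r := exists s, size s = r /\ (forall x, x \in s -> H x) /\ Zindep s.
have P0 : Pr 0%N by exists [::]; split => //; split => //; apply/Zindep_indep; exact: indep_nil.
have bnd : forall r, Pr r -> (r <= size E)%N.
  by move=> r [s [<- [_ /Zindep_indep hs]]]; exact: indep_le hs.
have [r [[Y0 [hY0s [hY0H hY0i]]] rmax]] := ex_max (ex_intro _ _ P0) bnd.
move/Zindep_indep in hY0i.
have hrank : rankZ_is H r.
  split; first by exists Y0; split => //; split => //; apply/Zindep_indep.
  by move=> s hs hi; apply: rmax; exists s.
have Hiso : forall h, H h -> isolator (spn Y0) h.
  move=> h hh; apply: dep_extend => // hi.
  have : Pr (size (h :: Y0)).
    exists (h :: Y0); split => //; split; last by apply/Zindep_indep.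
    by move=> x; rewrite inE => /orP [/eqP -> //|/hY0H].
  by move/rmax; rewrite /= hY0s ltnn.
have [R [hR1 [hR2 _]]] := cover hY0i.
pose hpk rho := pick (fun h => H h /\ spn Y0 (h - rho)).
pose X0 := Y0 ++ [seq hpk rho | rho <- R].
have hY0X0 : forall a, spn Y0 a -> spn X0 a.
  move=> a; apply: spn_min; first exact: spn_sub.
  by move=> y hy; apply: spn_mem; rewrite mem_cat hy.
have hX0gen : generates X0 H.
  split.
    move=> x; rewrite mem_cat => /orP [/hY0H //| /mapP [rho _ ->]].
    rewrite /hpk; case: (pick_or (fun h => H h /\ spn Y0 (h - rho))) => [[] //|->]; exact hH.1.
  move=> h hh; apply/in_span_spn.
  have [rho hrho hd] := hR2 h (Hiso h hh).
  have [h1 h2] : H (hpk rho) /\ spn Y0 (hpk rho - rho).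
    by apply: (@pickP _ (fun h => H h /\ spn Y0 (h - rho))); exists h.
  have -> : h = (h - rho) - (hpk rho - rho) + hpk rho.
    by rewrite opprB addrA subrK subrK.
  apply: subD; first exact: spn_sub.
    by apply: subB; [exact: spn_sub|apply: hY0X0|apply: hY0X0].
  by apply: spn_mem; rewrite mem_cat (map_f hpk hrho) orbT.
have [m0 hm0] := wl_list X0.
have [n [[X1 [hX1g hX1w]] nmin]] :=
  ex_min (ex_intro (subgroup_norm_le S H) m0 (ex_intro _ X0 (conj hX0gen hm0))).
have hnorm : subgroup_norm_is S H n by split => //; exists X1.
have [Y [hYX [hYi hYiso]]] := greedy X1.
have hYH : forall y, y \in Y -> H y by move=> y /hYX; apply: hX1g.1.
have hYr : (size Y <= r)%N.
  by apply: rmax; exists Y; split => //; split => //; apply/Zindep_indep.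
have HsubY : forall h, H h -> isolator (spn Y) h.
  move=> h hh; have := hX1g.2 h hh => /in_span_spn.
  by apply: spn_min; [exact: iso_sub (spn_sub Y)|exact: hYiso].
have K1 : forall a, isolator H a -> isolator (spn Y) a.
  by move=> a ha; apply: iso_iso; apply: iso_mono ha.
have K2 : forall a, isolator (spn Y) a -> isolator H a.
  by move=> a; apply: iso_mono => b; apply: spn_min hH hYH.
have [R' [hR'1 [hR'2 hR'3]]] := cover hYi.
have cK : forall x, x \in R' -> isolator H x by move=> x /hR'1 /K2.
have cC : forall a, isolator H a -> exists2 x, x \in R' & H (a - x).
  move=> a /K1 /hR'2 [x hx hax]; exists x => //; exact: spn_min hH hYH hax.
have [d [hd hdet]] := extract hH cK cC.
exists d, n, r; split => //; split => //; split => //.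
apply: leq_trans hd _; apply: leq_trans (hR'3 n (fun y hy => hX1w y (hYX y hy))) _.
apply: (@leq_trans ((size E)`! * (C1.+1 ^ size E * n ^ r) * size Tl)); last first.
  by rewrite !mulnA mulnAC.
apply: leq_mul => //; apply: leq_mul => //.
rewrite expnMn mulnC; apply: leq_mul.
  apply: leq_trans (expn_mono _ (leqnSn C1)) _.
  by apply: leq_pexp2l => //; apply: indep_le.
case: n hX1w {nmin hnorm hR'3} => [|n] hX1w; last by apply: leq_pexp2l.
have Y0nil : Y = [::].
  by apply: indep_zero => // y /hYX /hX1w /wl_zero.
have r0 : r = 0%N.
  rewrite -hY0s; suff -> : Y0 = [::] by [].
  apply: indep_zero => // y /hY0H hy.
  have := hX1g.2 y hy => /in_span_spn hsp.
  exact: (@spn_min A (fun x => x = 0) X1 y zero_sub (fun x hx => wl_zero (hX1w x hx)) hsp).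
by rewrite Y0nil r0.
Qed.

End Main.

Lemma uniformM (A : zmodType) (P : A -> Prop) (L : seq A) : is_subgroup P ->
  (forall x, x \in L -> isolator P x) -> exists M, (0 < M)%N /\ forall x, x \in L -> P (x *+ M).
Proof.
move=> hP; elim: L => [|x L IH] hL; first by exists 1%N.
have hL' : forall y, y \in L -> isolator P y by move=> y hy; apply: hL; rewrite inE hy orbT.
have [M [hM hM']] := IH hL'.
have [m [hm hx]] := hL x (mem_head x L).
exists (m * M)%N; split; first by rewrite muln_gt0 hm.
move=> y; rewrite inE => /orP [/eqP ->|/hM' h].
  by rewrite mulrnA; apply: subMn.
by rewrite mulnC mulrnA; apply: subMn.
Qed.

Unset Implicit Arguments.

Theorem mainTheorem9 (A : zmodType) (S : seq A)
    (hS : generates S (fun _ : A => True)) :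
  exists C : rat, 0 < C /\
    forall H : A -> Prop, is_subgroup H ->
      exists d n r : nat,
        det_is H d /\ subgroup_norm_is S H n /\ rankZ_is H r /\
        (d%:R <= C * (n%:R) ^+ r).
Proof.
have [E [_ [hE hEiso]]] := greedy S.
have [M [hM hMS]] := uniformM (spn_sub E) hEiso.
have hMsub : is_subgroup (fun a => spn E (a *+ M)).
  split; first by rewrite mul0rn; exact: (spn_sub E).1.
  by move=> x y hx hy; rewrite mulrnBl; apply: subB => //; exact: spn_sub.
have hMall : forall a, spn E (a *+ M).
  by move=> a; apply: (spn_min hMsub hMS (spnS hS a)).
have hcoord : forall a, exists v : 'rV[int]_(size E), a *+ M = \sum_(i < size E) E`_i *~ v 0 i.
  move=> a; have [c hc] := hMall a; exists (\row_i c i); rewrite hc.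
  by apply: eq_bigr => i _; rewrite mxE.
pose psi a := proj1_sig (constructive_indefinite_description _ (hcoord a)).
have hpsi : forall a, a *+ M = \sum_(i < size E) E`_i *~ psi a 0 i.
  by move=> a; exact: (proj2_sig (constructive_indefinite_description _ (hcoord a))).
have [Tl [hT1 hT2]] := Tl_ex hS hE hM hpsi.
pose K := ((size E)`! * (C1 S psi).+1 ^ size E * size Tl)%N.
exists (K.+1)%:R; split; first by rewrite ltr0Sn.
move=> H hH.
have [d [n [r [h1 [h2 [h3 h4]]]]]] := main_sec hS hE hM hpsi hT1 hT2 hH.
exists d, n, r; split => //; split => //; split => //.
rewrite -natrX -natrM ler_nat; apply: leq_trans h4 _.
by rewrite leq_mul2r leqnSn orbT.
Qed.
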